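(* Suppose that computing the fixed point of $\bm{x}\mapsto\bm{f}(\bm{h}(\bm{x},\bm{p},\kappa),\kappa)$, for any given $\bm{p}$ and $\kappa$, has complexity $O(K)$. Treat the tolerance $\epsilon>0$, the iteration parameter $\tau$ and the maximum power $p^{max}$ as constants. Then algorithm PALO, run on a network with $n$ cells and $m$ UEs, terminates and runs in time $O(Km^2n^2)$.
   Context: Cellular network model. $\mathcal{I}$ is a set of $n$ cells and $\mathcal{J}$ a set of $m$ UEs. An association is $\kappa\in\{0,1\}^{n\times m}$, with $\mathcal{I}_j=\{i:\kappa_{ij}=1\}$ and $\mathcal{J}_i=\{j:\kappa_{ij}=1\}$. Demands $\bm{d}\in\mathbb{R}^m_{>0}$, noise $\sigma^2>0$, gains $g_{ij}>0$ and constants $M,B>0$ are fixed. For power $\bm{p}\in\mathbb{R}^n_{>0}$ with $p_i\le p^{max}$: - $h_j(\bm{x},\bm{p},\kappa)=\dfrac{\sum_{i\in\mathcal{I}_j}p_ig_{ij}}{\sum_{k\notin\mathcal{I}_j}p_kg_{kj}x_k+\sigma^2}$; - $f_i(\bm{\gamma},\kappa)=\sum_{j\in\mathcal{J}_i}\dfrac{d_j}{MB\log_2(1+\gamma_j)}$; - $\mathrm{Fix}\{\cdot\}$ denotes the (unique) fixed point of the map $\bm{x}\mapsto\bm{f}(\bm{h}(\bm{x},\bm{p},\kappa),\kappa)$. POLO$(\bm{p},\bm{x},\kappa,\epsilon)$: 1. Set $\check\beta=0$, $\hat\beta=1$, $\bm{p}'=\bm{p}+\epsilon\bm{1}$ and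 $\bm{p}''=\bm{p}$. 2. While $\|\bm{p}'-\bm{p}''\|>\epsilon$ (Euclidean norm): - set $\beta=(\check\beta+\hat\beta)/2$, then $\bm{p}''\leftarrow\bm{p}'$ and $\bm{p}'\leftarrow\beta\bm{p}$; - compute $\bm{x}'=\mathrm{Fix}\{\bm{f}(\bm{h}(\bm{x},\bm{p}',\kappa),\kappa)\}$ and set $\bm{x}\leftarrow\bm{x}'$; - if $\max_i x'_i>1$ set $\check\beta\leftarrow\beta$, otherwise set $\hat\beta\leftarrow\beta$. 3. Return $(\bm{p}',\bm{x}')$. AOLO$(\bm{p},\bm{x},\kappa,\tau)$, with working copy $\kappa'$ of $\kappa$: for each pair $(i,j)$ with $\kappa_{ij}=0$: 1. Set $\bm{x}^{(0)}=\bm{x}$. 2. For $k=1,\dots,\tau$, if $\kappa_{ij}=0$: - set $\kappa'_{ij}=1$ and $\bm{x}^{(k)}=\bm{f}(\bm{h}(\bm{x}^{(k-1)},\bm{p},\kappa'),\kappa)$; - if $x^{(k)}_i\le f_i(\bm{h}(\bm{x}^{(k)},\bm{p},\kappa'),\kappa')$, set $\kappa_{ij}=1$ and $\bm{x}'=\mathrm{Fix}\{\bm{f}(\bm{h}(\bm{x},\bm{p},\kappa'),\kappa')\}$. It returns $(\kappa',\bm{x}')$. AOLO only changes entries of the association from $0$ to $1$. PALO$(\bm{p},\bm{x},\kappa,\epsilon,\tau)$ repeats the following until the association returned by AOLO equals its input association: - $(\bm{p}',\bm{x}')\leftarrow$ POLO$(\bm{p},\bm{x},\kappa,\epsilon)$;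 - $(\kappa',\bm{x}'')\leftarrow$ AOLO$(\bm{p}',\bm{x}',\kappa,\tau)$; - $(\bm{p},\bm{x},\kappa)\leftarrow(\bm{p}',\bm{x}'',\kappa')$. It outputs $\bm{p}'$ and $\kappa'$. *)

(* Defs.v *)
From HB Require Import structures.
From mathcomp Require Import all_boot all_order all_algebra.
From mathcomp Require Import boolp classical_sets reals exp.

Set Implicit Arguments.
Unset Strict Implicit.
Unset Printing Implicit Defensive.

Import Order.TTheory GRing.Theory Num.Theory.
Local Open Scope ring_scope.

(* Network data: n cells, m UEs.                                            *)
(* Vectors indexed by cells/UEs are row vectors 'rV_n / 'rV_m; an           *)
(* association kappa is a boolean n x m matrix.                             *)
Record network (R : realType) (n m : nat) := Network {
  dem : 'rV[R]_m;
  sigma2 : R;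
  gain : 'M[R]_(n, m);
  cM : R;
  cB : R }.

Section Model.
Variables (R : realType) (n m : nat) (N : network R n m).

Definition log2 (y : R) : R := ln y / ln 2.

Definition hvec (x p : 'rV[R]_n) (ka : 'M[bool]_(n, m)) : 'rV[R]_m :=
  \row_j ((\sum_(i < n | ka i j) p 0 i * gain N i j) /
          (\sum_(k < n | ~~ ka k j) p 0 k * gain N k j * x 0 k + sigma2 N)).

Definition fvec (g : 'rV[R]_m) (ka : 'M[bool]_(n, m)) : 'rV[R]_n :=
  \row_i (\sum_(j < m | ka i j) dem N 0 j / (cM N * cB N * log2 (1 + g 0 j))).

Definition Fmap (p : 'rV[R]_n) (ka : 'M[bool]_(n, m)) (x : 'rV[R]_n) :=
  fvec (hvec x p ka) ka.

(* Fix{f(h(x,p,kappa),kappa)}: the unique fixed point of the map (chosen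
   classically); if there is no unique fixed point the starting point x is
   returned (this case does not arise under the paper's assumptions). *)
Definition Fixp (x p : 'rV[R]_n) (ka : 'M[bool]_(n, m)) : 'rV[R]_n :=
  xget x [set y | y = Fmap p ka y /\ forall z, z = Fmap p ka z -> z = y].

Definition enorm (v : 'rV[R]_n) : R := Num.sqrt (\sum_(i < n) v 0 i ^+ 2).

Definition set1mx (ka : 'M[bool]_(n, m)) (i : 'I_n) (j : 'I_m) :=
  \matrix_(a < n, b < m) if (a == i) && (b == j) then true else ka a b.

(* Cost model (number of elementary steps):                                 *)
(*   - one computation of Fix{...}                         : K              *)
(*   - one evaluation of f(h(.,p,kappa),kappa) or of f_i(h(.)) : n * m      *)
(*   - one operation on an n-vector (norm, scaling, max test) : n           *)
(*   - comparing two associations                          : n * m          *)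
(*   - any other loop step / scalar test                   : 1              *)
(* Fuel parameters bound the number of iterations of the while-loops;      *)
(* [None] means the fuel ran out (non-termination within the fuel).        *)
Variables (eps : R) (tau K : nat).

(* POLO main loop.  State: p (fixed input), lo = check-beta, hi = hat-beta,
   p' , p'' , x (current iterate), x' (last computed fixed point), cost. *)
Fixpoint polo_loop (fuel : nat) (ka : 'M[bool]_(n, m)) (p : 'rV[R]_n)
    (lo hi : R) (p1 p2 x x1 : 'rV[R]_n) (c : nat)
    : option ('rV[R]_n * 'rV[R]_n * nat) :=
  if eps < enorm (p1 - p2) then
    match fuel with
    | 0 => None
    | S fuel' =>
      let beta := (lo + hi) / 2 in
      let p2' := p1 in
      let p1' := beta *: p in
      let x1' := Fixp x p1' ka in
      let c' := (c + n + n + K + n + 1)%N in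
      if [exists i, 1 < x1' 0 i]
      then polo_loop fuel' ka p beta hi p1' p2' x1' x1' c'
      else polo_loop fuel' ka p lo beta p1' p2' x1' x1' c'
    end
  else Some (p1, x1, (c + n)%N).

(* POLO(p, x, kappa, eps); x' is initialised to x (it is only read if the
   while-loop body is never executed). *)
Definition POLO (fuel : nat) (p x : 'rV[R]_n) (ka : 'M[bool]_(n, m)) :=
  polo_loop fuel ka p 0 1 (p + eps *: const_mx 1) p x x 0%N.

(* AOLO inner loop over k = 1..tau for the pair (i, j).
   ka = kappa (marked entries), kw = kappa' (working copy),
   xk = x^(k-1), x1 = x'. *)
Fixpoint aolo_inner (t : nat) (p x : 'rV[R]_n) (i : 'I_n) (j : 'I_m)
    (ka kw : 'M[bool]_(n, m)) (xk x1 : 'rV[R]_n) (c : nat)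
    : 'M[bool]_(n, m) * 'M[bool]_(n, m) * 'rV[R]_n * nat :=
  match t with
  | 0 => (ka, kw, x1, c)
  | S t' =>
    if ~~ ka i j then
      let kw' := set1mx kw i j in
      let xk' := fvec (hvec xk p kw') ka in
      let c' := (c + n * m + n * m + 1)%N in
      if xk' 0 i <= (fvec (hvec xk' p kw') kw') 0 i then
        aolo_inner t' p x i j (set1mx ka i j) kw' xk' (Fixp x p kw') (c' + K)
      else aolo_inner t' p x i j ka kw' xk' x1 c'
    else aolo_inner t' p x i j ka kw xk x1 (c + 1)
  end.

(* AOLO(p, x, kappa, tau): returns (kappa', x', cost); x' is initialised
   to x. Pairs are visited in the canonical enumeration order. *)
Definition AOLO (p x : 'rV[R]_n) (ka : 'M[bool]_(n, m))
    : 'M[bool]_(n, m) * 'rV[R]_n * nat :=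
  let '(_, kw, x1, c) :=
    foldl (fun (st : 'M[bool]_(n, m) * 'M[bool]_(n, m) * 'rV[R]_n * nat)
                 (ij : 'I_n * 'I_m) =>
             let '(ka0, kw0, x0, c0) := st in
             if ~~ ka0 ij.1 ij.2 then
               aolo_inner tau p x ij.1 ij.2 ka0 kw0 x x0 (c0 + 1)
             else (ka0, kw0, x0, (c0 + 1)%N))
          (ka, ka, x, 0%N) [seq (i, j) | i <- enum 'I_n, j <- enum 'I_m] in
  (kw, x1, c).

Fixpoint palo_loop (fuel : nat) (p x : 'rV[R]_n) (ka : 'M[bool]_(n, m))
    (c : nat) : option ('rV[R]_n * 'M[bool]_(n, m) * nat) :=
  match fuel with
  | 0 => None
  | S fuel' =>
    match POLO fuel p x ka with
    | None => None
    | Some (p1, x1, c1) =>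
      let '(ka1, x2, c2) := AOLO p1 x1 ka in
      let c' := (c + c1 + c2 + n * m)%N in
      if ka1 == ka then Some (p1, ka1, c')
      else palo_loop fuel' p1 x2 ka1 c'
    end
  end.

Definition PALO (fuel : nat) (p x : 'rV[R]_n) (ka : 'M[bool]_(n, m)) :=
  palo_loop fuel p x ka 0%N.

End Model.

(* Main.v *)
Require Import Defs.
From HB Require Import structures.
From mathcomp Require Import all_boot all_order all_algebra.
From mathcomp Require Import boolp classical_sets reals exp.
From mathcomp Require Import zify ring lra.
Import Order.TTheory GRing.Theory Num.Theory.
Local Open Scope ring_scope.

Section Proofs.
Variables (R : realType) (n m : nat) (N : network R n m) (eps : R) (tau K : nat).
Hypothesis eps_gt0 : 0 < eps.

Lemma enormZ (c : R) (v : 'rV[R]_n) : enorm (c *: v) = `|c| * enorm v.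
Proof.
rewrite /enorm.
have -> : \sum_(i < n) (c *: v) 0 i ^+ 2 = c ^+ 2 * \sum_(i < n) v 0 i ^+ 2.
  by rewrite mulr_sumr; apply: eq_bigr => i _; rewrite mxE exprMn.
by rewrite sqrtrM ?sqr_ge0 // sqrtr_sqr.
Qed.

Lemma enormN (v : 'rV[R]_n) : enorm (- v) = enorm v.
Proof. by rewrite -scaleN1r enormZ normrN normr1 mul1r. Qed.

Lemma enorm_ge0 (v : 'rV[R]_n) : 0 <= enorm v.
Proof. exact: sqrtr_ge0. Qed.

Lemma polo_stop f ka p lo hi p1 p2 x x1 c :
  ~~ (eps < enorm (p1 - p2)) ->
  polo_loop N eps K f ka p lo hi p1 p2 x x1 c = Some (p1, x1, (c + n)%N).
Proof. by move/negbTE=> H; case: f => [|f] /=; rewrite H. Qed.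

Lemma polo_step f ka p lo hi p1 p2 x x1 c :
  eps < enorm (p1 - p2) ->
  exists lo' hi' x',
    ((lo' = lo /\ hi' = (lo + hi) / 2) \/ (lo' = (lo + hi) / 2 /\ hi' = hi)) /\
    polo_loop N eps K f.+1 ka p lo hi p1 p2 x x1 c =
    polo_loop N eps K f ka p lo' hi' (((lo + hi) / 2) *: p) p1 x' x'
              (c + n + n + K + n + 1)%N.
Proof.
move=> H /=; rewrite H; case: ifP => _.
  by do 3 eexists; split; [right; split|]; reflexivity.
by do 3 eexists; split; [left; split|]; reflexivity.
Qed.

Definition S0 := (3 * n + K + 1)%N.

Lemma polo_inv ka p (j : nat) : forall fuel lo hi b p1 p2 x x1 c w,
  0 <= lo -> hi <= 1 -> hi - lo = w -> 0 < w -> (b = lo \/ b = hi) ->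
  p1 = b *: p ->
  enorm (p1 - p2) <= eps * 2 ^+ j -> w * enorm p <= eps * 2 ^+ j ->
  (j <= fuel)%N ->
  exists p1' x1' c',
    polo_loop N eps K fuel ka p lo hi p1 p2 x x1 c = Some (p1', x1', c') /\
    (c' <= c + j * S0 + n)%N /\ exists b', 0 <= b' <= 1 /\ p1' = b' *: p.
Proof.
elim: j => [|j IH] fuel lo hi b p1 p2 x x1 c w Hlo Hhi Hw Hw0 Hb Hp1 He Hwe Hf.
  rewrite polo_stop; last by rewrite -leNgt; rewrite expr0 mulr1 in He.
  do 3 eexists; split; first reflexivity; split; first lia.
  by exists b; split => //; case: Hb => ->; apply/andP; split; lra.
case: (boolP (eps < enorm (p1 - p2))) => Hc; last first.
  rewrite polo_stop //; do 3 eexists; split; first reflexivity; split; first lia.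
  by exists b; split => //; case: Hb => ->; apply/andP; split; lra.
case: fuel Hf => [//|f] Hf.
have [lo' [hi' [x' [Hlh ->]]]] := polo_step f ka p lo hi p1 p2 x x1 c Hc.
have E0 := enorm_ge0 p.
have Hd : enorm ((lo + hi) / 2 *: p - p1) = w / 2 * enorm p.
  rewrite Hp1 -scalerBl enormZ; congr (_ * _).
  case: Hb => ->; [rewrite ger0_norm; lra| rewrite ler0_norm; lra].
have Hwe' : w / 2 * enorm p <= eps * 2 ^+ j.
  rewrite exprS in Hwe; set t := 2 ^+ j in Hwe *; set a := w * enorm p in Hwe.
  have -> : w / 2 * enorm p = a / 2 by rewrite /a; ring.
  set bb := eps * t.
  rewrite (_ : eps * (2 * t) = 2 * bb) in Hwe; last by rewrite /bb; ring.
  lra.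
have [p1' [x1' [c' [-> [Hc' Hb']]]]] :
  exists p1' x1' c', polo_loop N eps K f ka p lo' hi' ((lo + hi) / 2 *: p) p1 x' x'
    (c + n + n + K + n + 1) = Some (p1', x1', c') /\
    (c' <= (c + n + n + K + n + 1) + j * S0 + n)%N /\
    exists b', 0 <= b' <= 1 /\ p1' = b' *: p.
  case: Hlh => [[-> ->]|[-> ->]].
  - apply: (IH f lo ((lo+hi)/2) ((lo+hi)/2) _ _ _ _ _ (w/2)) => //;
      try lra; try (by right); try (by rewrite Hd); lia.
  - apply: (IH f ((lo+hi)/2) hi ((lo+hi)/2) _ _ _ _ _ (w/2)) => //;
      try lra; try (by left); try (by rewrite Hd); lia.
do 3 eexists; split; first reflexivity; split => //.
rewrite /S0 in Hc' *; lia.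
Qed.

Lemma scale_bound (b P : R) (p : 'rV[R]_n) i :
  0 <= b <= 1 -> 0 <= P -> `|p 0 i| <= P -> `|(b *: p) 0 i| <= P + eps.
Proof.
move=> /andP[b0 b1] P0 Hp; rewrite mxE normrM ger0_norm //.
have H : b * `|p 0 i| <= 1 * P by apply: ler_pM.
apply: (le_trans H); rewrite mul1r lerDl; exact: ltW.
Qed.

Lemma polo_init (ka : 'M[bool]_(n, m)) (p x : 'rV[R]_n) (j fuel : nat) (P : R) :
  0 <= P -> (forall i, `|p 0 i| <= P) -> enorm p / 4 <= eps * 2 ^+ j ->
  (j + 2 <= fuel)%N ->
  exists (p1 x1 : 'rV[R]_n) (c1 : nat), POLO N eps K fuel p x ka = Some (p1, x1, c1) /\
    (c1 <= (j + 2) * S0 + n)%N /\ forall i, `|p1 0 i| <= P + eps.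
Proof.
move=> P0 Hp HE Hf; rewrite /POLO.
have E0 := enorm_ge0 p.
case: (boolP (eps < enorm (p + eps *: const_mx 1 - p))) => Hc; last first.
  rewrite polo_stop //; do 3 eexists; split; first reflexivity; split; first lia.
  move=> i; rewrite !mxE mulr1; apply: (le_trans (ler_normD _ _)).
  by rewrite (gtr0_norm eps_gt0) lerD2r.
case: fuel Hf => [|f] Hf; first lia.
have [lo' [hi' [x' [Hlh ->]]]] := polo_step f ka p 0 1 _ _ x x 0 Hc.
have Hlh' : (lo' = 0 /\ hi' = 1/2) \/ (lo' = 1/2 /\ hi' = 1).
  by case: Hlh => [[-> ->]|[-> ->]]; [left|right]; split => //; rewrite add0r.
clear Hlh.
rewrite (_ : (0 + 1) / 2 = 1 / 2 :> R); last by rewrite add0r.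
case: (boolP (eps < enorm (1 / 2 *: p - (p + eps *: const_mx 1)))) => Hc2; last first.
  rewrite polo_stop //; do 3 eexists; split; first reflexivity; split.
    by rewrite /S0; lia.
  by move=> i; apply: scale_bound => //; apply/andP; split; lra.
case: f Hf => [|f] Hf; first lia.
have [lo'' [hi'' [x'' [Hlh ->]]]] := polo_step f ka p lo' hi' _ _ x' x' (0 + n + n + K + n + 1)%N Hc2.
set mid := (lo' + hi') / 2 in Hlh *.
have Hmid : `|mid - 1/2| = 1/4.
  by rewrite /mid; case: Hlh' => [[-> ->]|[-> ->]];
    [rewrite ler0_norm; lra | rewrite ger0_norm; lra].
have [p1' [x1' [c' [-> [Hc' [b' [Hb' ->]]]]]]] :
  exists p1' x1' c', polo_loop N eps K f ka p lo'' hi'' (mid *: p) (1 / 2 *: p) x'' x''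
    (0 + n + n + K + n + 1 + n + n + K + n + 1)%N = Some (p1', x1', c') /\
    (c' <= (0 + n + n + K + n + 1 + n + n + K + n + 1) + j * S0 + n)%N /\
    exists b', 0 <= b' <= 1 /\ p1' = b' *: p.
  have Hd : enorm (mid *: p - 1 / 2 *: p) = 1/4 * enorm p.
    by rewrite -scalerBl enormZ Hmid.
  have Hd' : enorm (mid *: p - 1 / 2 *: p) <= eps * 2 ^+ j by rewrite Hd; lra.
  have HE' : 1/4 * enorm p <= eps * 2 ^+ j by lra.
  have Hlm : 0 <= lo' /\ hi' <= 1 /\ hi' - lo' = 1/2.
    by case: Hlh' => [[-> ->]|[-> ->]]; lra.
  have Hmid2 : mid = (lo' + hi') / 2 by [].
  clearbody mid.
  case: Hlh => [[-> ->]|[-> ->]].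
  - apply: (polo_inv _ _ _ _ _ _ mid _ _ _ _ _ (1/4)) => //; try lra; try (by right); lia.
  - apply: (polo_inv _ _ _ _ _ _ mid _ _ _ _ _ (1/4)) => //; try lra; try (by left); lia.
do 3 eexists; split; first reflexivity; split.
  by rewrite /S0 in Hc' *; lia.
by move=> i; apply: scale_bound.
Qed.

Definition subm (a b : 'M[bool]_(n, m)) := forall i j, a i j -> b i j.

Lemma subm_refl a : subm a a. Proof. by []. Qed.
Lemma subm_trans a b c : subm a b -> subm b c -> subm a c.
Proof. by move=> H1 H2 i j /H1 /H2. Qed.
Lemma subm_set1 a i j : subm a (set1mx a i j).
Proof. by move=> i' j' H; rewrite mxE H; case: ifP. Qed.

Definition Dc := (n * m + n * m + 1 + K)%N.

Lemma inner_bound (p x : 'rV[R]_n) i j (t : nat) : forall ka kw xk x1 c,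
  exists ka' kw' x' c', aolo_inner N K t p x i j ka kw xk x1 c = (ka', kw', x', c')
    /\ subm kw kw' /\ (c' <= c + t * Dc)%N.
Proof.
rewrite /Dc; elim: t => [|t IH] ka kw xk x1 c /=.
  by do 4 eexists; split; first reflexivity; split; [exact: subm_refl | lia].
case: ifP => _; last first.
  have [a [b [y [d [-> [Hs Hd]]]]]] := IH ka kw xk x1 (c + 1)%N.
  by do 4 eexists; split; first reflexivity; split => //; lia.
case: ifP => _.
  have [a [b [y [d [-> [Hs Hd]]]]]] := IH (set1mx ka i j) (set1mx kw i j)
    (fvec N (hvec N xk p (set1mx kw i j)) ka)
    (Fixp N x p (set1mx kw i j)) (c + n * m + n * m + 1 + K)%N.
  do 4 eexists; split; first reflexivity; split; last lia.
  exact: subm_trans (subm_set1 _ _ _) Hs.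
have [a [b [y [d [-> [Hs Hd]]]]]] := IH ka (set1mx kw i j)
  (fvec N (hvec N xk p (set1mx kw i j)) ka) x1 (c + n * m + n * m + 1)%N.
do 4 eexists; split; first reflexivity; split; last lia.
exact: subm_trans (subm_set1 _ _ _) Hs.
Qed.

Lemma foldl_bound (T : Type)
  (F : 'M[bool]_(n, m) * 'M[bool]_(n, m) * 'rV[R]_n * nat -> T ->
       'M[bool]_(n, m) * 'M[bool]_(n, m) * 'rV[R]_n * nat) (D : nat) :
  (forall a b x c t, exists a' b' x' c', F (a, b, x, c) t = (a', b', x', c') /\
     subm b b' /\ (c' <= c + D)%N) ->
  forall s a b x c a' b' x' c', foldl F (a, b, x, c) s = (a', b', x', c') ->
    subm b b' /\ (c' <= c + size s * D)%N.
Proof.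
move=> HF; elim=> [|t s IH] a b x c a' b' x' c' /=.
  by case=> _ <- _ <-; split; [exact: subm_refl | lia].
have [a1 [b1 [x1 [c1 [-> [Hs Hc]]]]]] := HF a b x c t.
move/IH => [Hs' Hc']; split; first exact: subm_trans Hs Hs'.
lia.
Qed.

Lemma aolo_bound (p x : 'rV[R]_n) ka ka1 x2 c2 :
  AOLO N tau K p x ka = (ka1, x2, c2) ->
  subm ka ka1 /\ (c2 <= n * m * (1 + tau * Dc))%N.
Proof.
rewrite /AOLO; case E : foldl => [[[a b] y] c] [<- _ <-].
move: E; move/foldl_bound => H.
have [|Hs Hc] := H (1 + tau * Dc)%N.
  move=> a0 b0 x0 c0 [i0 j0] /=; case: ifP => _.
    have [a' [b' [y' [d' [-> [Hs Hd]]]]]] := inner_bound p x i0 j0 tau a0 b0 x x0 (c0 + 1)%N.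
    by do 4 eexists; split; first reflexivity; split => //; lia.
  by do 4 eexists; split; first reflexivity; split; [exact: subm_refl | lia].
by rewrite size_allpairs !size_enum_ord in Hc.
Qed.

Definition cnt (ka : 'M[bool]_(n, m)) := #|[set ij : 'I_n * 'I_m | ka ij.1 ij.2]|.

Lemma cnt_le ka : (cnt ka <= n * m)%N.
Proof. by rewrite /cnt (leq_trans (max_card _)) // card_prod !card_ord. Qed.

Lemma cnt_lt a b : subm a b -> b != a -> (cnt a < cnt b)%N.
Proof.
move=> Hs Hne; apply: proper_card; rewrite finset.properEneq; apply/andP; split.
  apply: contra Hne => /eqP E; apply/eqP/matrixP => i j.
  have := congr1 (fun A : {set 'I_n * 'I_m} => (i, j) \in A) E.
  by rewrite /= !inE /= => ->.
by apply/fintype.subsetP => [[i j]]; rewrite !inE /=; apply: Hs.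
Qed.

Lemma palo_step (p x : 'rV[R]_n) ka c f j0 P :
  0 <= P -> (forall i, `|p 0 i| <= P) -> enorm p / 4 <= eps * 2 ^+ j0 ->
  (j0 + 2 <= f.+1)%N ->
  exists (p1 x1 : 'rV[R]_n) (c1 : nat) ka1 (x2 : 'rV[R]_n) (c2 : nat),
    palo_loop N eps tau K f.+1 p x ka c =
      (if ka1 == ka then Some (p1, ka1, (c + c1 + c2 + n * m)%N)
       else palo_loop N eps tau K f p1 x2 ka1 (c + c1 + c2 + n * m)%N) /\
    (c1 <= (j0 + 2) * S0 + n)%N /\ subm ka ka1 /\
    (c2 <= n * m * (1 + tau * Dc))%N /\ (forall i, `|p1 0 i| <= P + eps).
Proof.
move=> P0 Hp HE Hf.
have [p1 [x1 [c1 [E1 [Hc1 Hb1]]]]] := polo_init ka p x j0 f.+1 P P0 Hp HE Hf.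
case E2 : (AOLO N tau K p1 x1 ka) => [[ka1 x2] c2].
have [Hs Hc2] := aolo_bound p1 x1 ka ka1 x2 c2 E2.
exists p1, x1, c1, ka1, x2, c2; split => //.
by rewrite /= E1 E2.
Qed.

Lemma palo_ind (pmax : R) (j0 : nat) : 0 <= pmax ->
  (forall p : 'rV[R]_n, (forall i, `|p 0 i| <= pmax + (n * m)%:R * eps) ->
     enorm p / 4 <= eps * 2 ^+ j0) ->
  forall t fuel (p x : 'rV[R]_n) ka c,
  (t <= n * m)%N -> (n * m - cnt ka <= t)%N -> (t + j0 + 2 <= fuel)%N ->
  (forall i, `|p 0 i| <= pmax + (n * m - t)%:R * eps) ->
  exists p' ka' c', palo_loop N eps tau K fuel p x ka c = Some (p', ka', c') /\
    (c' <= c + (t + 1) * ((j0 + 2) * S0 + n + n * m * (1 + tau * Dc) + n * m))%N.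
Proof.
move=> Hpm Hj; elim=> [|t IH] [|f] p x ka c Ht Hc Hf Hp; try lia.
- have P0 : 0 <= pmax + (n * m - 0)%:R * eps.
    by apply: addr_ge0 => //; apply: mulr_ge0 => //; exact: ltW.
  have HE : enorm p / 4 <= eps * 2 ^+ j0.
    by apply: Hj => i; rewrite subn0 in Hp.
  have [p1 [x1 [c1 [ka1 [x2 [c2 [-> [Hc1 [Hs [Hc2 Hb]]]]]]]]]] :=
    palo_step p x ka c f j0 _ P0 Hp HE ltac:(lia).
  case: eqP => Heq.
    do 3 eexists; split; first reflexivity.
    move: Hc1 Hc2; set A := ((j0 + 2) * S0)%N; set B := (n * m * (1 + tau * Dc))%N.
    set D := (n * m)%N; lia.
  have := cnt_lt ka ka1 Hs (introN eqP Heq); have := cnt_le ka1; lia.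
- have P0 : 0 <= pmax + (n * m - t.+1)%:R * eps.
    by apply: addr_ge0 => //; apply: mulr_ge0 => //; exact: ltW.
  have HE : enorm p / 4 <= eps * 2 ^+ j0.
    apply: Hj => i; apply: (le_trans (Hp i)); rewrite lerD2l.
    by apply: ler_wpM2r; [exact: ltW | rewrite ler_nat leq_subr].
  have [p1 [x1 [c1 [ka1 [x2 [c2 [-> [Hc1 [Hs [Hc2 Hb]]]]]]]]]] :=
    palo_step p x ka c f j0 _ P0 Hp HE ltac:(lia).
  case: eqP => Heq.
    do 3 eexists; split; first reflexivity.
    move: Hc1 Hc2; set A := ((j0 + 2) * S0)%N; set B := (n * m * (1 + tau * Dc))%N.
    set D := (n * m)%N; set T := (t.+1 + 1)%N.
    have : (1 <= T)%N by rewrite /T; lia.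
    move=> HT Hc1 Hc2.
    have : (A + n + B + D <= T * (A + n + B + D))%N by rewrite leq_pmull.
    lia.
  have Hlt := cnt_lt ka ka1 Hs (introN eqP Heq).
  have Hbd : forall i, `|p1 0 i| <= pmax + (n * m - t)%:R * eps.
    move=> i; apply: (le_trans (Hb i)).
    rewrite (_ : (n * m - t)%N = (n * m - t.+1) + 1)%N; last lia.
    by rewrite natrD mulrDl mul1r addrA.
  have Hcl := cnt_le ka1.
  have [p' [ka' [c' [-> Hc']]]] := IH f p1 x2 ka1 (c + c1 + c2 + n * m)%N
    ltac:(lia) ltac:(lia) ltac:(lia) Hbd.
  do 3 eexists; split; first reflexivity.
  move: Hc1 Hc2 Hc'; set A := ((j0 + 2) * S0)%N; set B := (n * m * (1 + tau * Dc))%N.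
  set D := (n * m)%N; set Q := (A + n + B + D)%N.
  rewrite (_ : (t.+1 + 1) * Q = Q + (t + 1) * Q)%N; last by rewrite mulnDl; lia.
  lia.
Qed.

Lemma enorm_bound (p : 'rV[R]_n) (P : R) : (0 < n)%N -> 0 <= P ->
  (forall i, `|p 0 i| <= P) -> enorm p <= n%:R * P.
Proof.
move=> n0 P0 Hp; rewrite /enorm.
have H1 : \sum_(i < n) p 0 i ^+ 2 <= \sum_(i < n) P ^+ 2.
  apply: ler_sum => i _; have := Hp i; rewrite ler_norml => /andP[h1 h2].
  rewrite !expr2; nra.
rewrite sumr_const card_ord -mulr_natl in H1.
have H2 : n%:R * P ^+ 2 <= (n%:R * P) ^+ 2.
  have hn : 1 <= n%:R :> R by rewrite ler1n.
  rewrite exprMn; apply: ler_wpM2r; first exact: sqr_ge0.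
  rewrite expr2; nra.
apply: (le_trans (ler_wsqrtr (le_trans H1 H2))).
rewrite sqrtr_sqr ger0_norm //; apply: mulr_ge0 => //; exact: ler0n.
Qed.
End Proofs.

Lemma nat_pow_bounds (n m A : nat) :
  (n * 2 ^ A <= 2 ^ (A + 2 * n + m))%N /\ (n * (n * m) <= 2 ^ (A + 2 * n + m))%N.
Proof.
have hn : (n <= 2 ^ n)%N by apply: ltnW; apply: ltn_expl.
have hm : (m <= 2 ^ m)%N by apply: ltnW; apply: ltn_expl.
split.
  apply: (leq_trans (leq_mul hn (leqnn (2 ^ A)))).
  by rewrite -expnD leq_pexp2l //; lia.
apply: (leq_trans (leq_mul hn (leq_mul hn hm))).
by rewrite -!expnD leq_pexp2l //; lia.
Qed.


Lemma final_arith (n m K A tau : nat) : (0 < n)%N -> (0 < m)%N -> (n * m <= K)%N ->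
 ((n * m + 1) * ((A + 2 * n + m + 2) * (3 * n + K + 1) + n +
   n * m * (1 + tau * (n * m + n * m + 1 + K)) + n * m)
  <= 2 * (5 * A + 28 + 4 * tau) * K * m ^ 2 * n ^ 2)%N.
Proof.
move=> n0 m0 HK.
have hnX : (n <= n * m)%N by rewrite leq_pmulr.
have hmX : (m <= n * m)%N by rewrite leq_pmull.
have hX1 : (1 <= n * m)%N by rewrite muln_gt0 n0.
have RHS : (2 * (5 * A + 28 + 4 * tau) * K * m ^ 2 * n ^ 2 =
   2 * (n * m) * ((n * m) * K * (5 * A + 28 + 4 * tau)))%N by ring.
rewrite RHS; move: RHS => _.
move: hnX hmX hX1 HK; set X := (n * m)%N => hnX hmX hX1 HK.
have hK1 : (1 <= K)%N by lia.
have hAX : (A <= A * X)%N by rewrite leq_pmulr.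
have e1 : (A + 2 * n + m + 2 <= (A + 5) * X)%N by rewrite mulnDl; lia.
have e2 : (3 * n + K + 1 <= 5 * K)%N by lia.
have e3 := leq_mul e1 e2.
have e4 : (tau * (X + X + 1 + K) <= tau * (4 * K))%N by rewrite leq_mul2l; apply/orP; right; lia.
have e5 : (X * (1 + tau * (X + X + 1 + K)) <= X * (1 + tau * (4 * K)))%N
  by rewrite leq_mul2l; apply/orP; right; lia.
have hnY : (n <= X * K)%N by apply: (leq_trans hnX); rewrite leq_pmulr.
have hXY : (X <= X * K)%N by rewrite leq_pmulr.
have E1 : ((A + 5) * X * (5 * K) = 5 * (A * (X * K)) + 25 * (X * K))%N by ring.
have E2 : (X * (1 + tau * (4 * K)) = X + 4 * (tau * (X * K)))%N by ring.
have E3 : (X * K * (5 * A + 28 + 4 * tau) = 5 * (A * (X * K)) + 28 * (X * K) + 4 * (tau * (X * K)))%N by ring.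
rewrite E1 in e3; rewrite E2 in e5.
set Q := (_ + _ + _ + X)%N.
have HQ : (Q <= X * K * (5 * A + 28 + 4 * tau))%N.
  rewrite E3 /Q; move: e3 e5 hnY hXY.
  set a := (A * (X * K))%N; set b := (tau * (X * K))%N; set Y := (X * K)%N.
  set u := ((A + 2 * n + m + 2) * (3 * n + K + 1))%N.
  set v := (X * (1 + tau * (X + X + 1 + K)))%N.
  lia.
apply: (leq_trans (leq_mul (leqnn (X + 1)) HQ)).
apply: leq_mul => //; lia.
Qed.

Theorem theorem3 (R : realType) (eps : R) (tau : nat) (pmax : R) :
  0 < eps -> 0 < pmax ->
  exists C : nat,
    forall (n m : nat) (N : network R n m) (K : nat)
           (p x : 'rV[R]_n) (ka : 'M[bool]_(n, m)),
      (0 < n)%N -> (0 < m)%N ->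
      (forall j, 0 < dem N 0 j) -> 0 < sigma2 N ->
      (forall i j, 0 < gain N i j) -> 0 < cM N -> 0 < cB N ->
      (forall i, 0 < p 0 i <= pmax) ->
      (n * m <= K)%N ->
      exists (fuel : nat) (p' : 'rV[R]_n) (ka' : 'M[bool]_(n, m)) (c : nat),
        PALO N eps tau K fuel p x ka = Some (p', ka', c) /\
        (c <= C * K * m ^ 2 * n ^ 2)%N.
Proof.
move=> eps0 pmax0.
set A := Num.Def.archi_bound (pmax / eps).
have HA : pmax <= eps * 2 ^+ A.
  have := upper_nthrootP (leqnn A); rewrite ltr_pdivrMr // => h.
  by rewrite mulrC; apply: ltW.
have Hpm : 0 <= pmax by exact: ltW.
exists (2 * (5 * A + 28 + 4 * tau))%N.
move=> n m N K p x ka n0 m0 _ _ _ _ _ Hp HK.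
set j0 := (A + 2 * n + m)%N.
have Hj : forall q : 'rV[R]_n, (forall i, `|q 0 i| <= pmax + (n * m)%:R * eps) ->
    enorm q / 4 <= eps * 2 ^+ j0.
  move=> q Hq.
  have P0 : 0 <= pmax + (n * m)%:R * eps.
    by apply: addr_ge0 => //; apply: mulr_ge0 => //; exact: ltW.
  have HE := @enorm_bound R n q _ n0 P0 Hq.
  have [F1 F2] := nat_pow_bounds n m A.
  rewrite -(ler_nat R) natrM !natrX in F1.
  rewrite -(ler_nat R) natrX in F2.
  rewrite -/j0 in F1 F2.
  set T := (2:R) ^+ j0 in F1 F2 *.
  set a := (2:R) ^+ A in F1 HA.
  have hn : 0 <= n%:R :> R by exact: ler0n.
  have G1 : n%:R * pmax <= eps * T.
    apply: (le_trans (ler_wpM2l hn HA)).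
    rewrite mulrCA; apply: ler_wpM2l; [exact: ltW | exact: F1].
  have G2 : n%:R * ((n * m)%:R * eps) <= eps * T.
    by rewrite mulrA -natrM mulrC; apply: ler_wpM2l; [exact: ltW | exact: F2].
  have G3 : enorm q <= 2 * (eps * T).
    apply: (le_trans HE); rewrite mulrDr; lra.
  have : 0 <= eps * T by apply: mulr_ge0; [exact: ltW | exact: exprn_ge0].
  lra.
have Hb : forall i, `|p 0 i| <= pmax + (n * m - n * m)%:R * eps.
  rewrite subnn mul0r addr0 => i; have /andP[h1 h2] := Hp i.
  by rewrite gtr0_norm.
have [p' [ka' [c' [E Hc]]]] := palo_ind R n m N eps tau K eps0 pmax j0 Hpm Hj (n * m)
  (n * m + j0 + 2) p x ka 0%N (leqnn (n * m)) (leq_subr _ _) (leqnn _) Hb.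
exists (n * m + j0 + 2)%N, p', ka', c'; split; first exact: E.
move: Hc; rewrite /S0 /Dc /j0 add0n => Hc; apply: (leq_trans Hc).
exact: final_arith.
Qed.
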